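(* For every instance $(A,C,k)$, every committee $W$ that the Greedy Justified Candidate Rule (GJCR) can output (under any tie-breaking), and every AV-completion $\overline{W}$ of $W$, the utilitarian ratio of $\overline{W}$ is at least $\frac{2}{\sqrt{k}}-\frac1k$.
   Context: An instance $(A,C,k)$ consists of a finite nonempty candidate set $C$, voters $N=\{1,\dots,n\}$, approval sets $A_i\subseteq C$, and a committee size $1\le k\le|C|$. $N_c=\{i: c\in A_i\}$. $\mathrm{sw}(W)=\sum_i|A_i\cap W|$; the utilitarian ratio of a committee $W$ ($|W|\le k$) is $\mathrm{sw}(W)/\max\{\mathrm{sw}(W'):|W'|=k\}$. GJCR starts with $W=\emptyset$ and repeatedly does the following: if there exist $c\in C\setminus W$, $\ell\in\{1,\dots,k\}$ and $N'\subseteq N_c$ with $|N'|\ge\ell n/k$ and $|A_i\cap W|<\ell$ for all $i\in N'$, it picks such a triple with $|N'|$ maximum (ties broken arbitrarily) and adds $c$ to $W$; otherwise it terminates and outputs $W$. An AV-completion of $W$ is $W\cup T$ with $T\subseteq C\setminus W$, $|T|=k-|W|$, maximizing $\sum_{c\in T}|N_c|$. *)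

(* Defs.v *)
From mathcomp Require Import all_boot all_order all_algebra.
Set Implicit Arguments. Unset Strict Implicit. Unset Printing Implicit Defensive.
Import Order.TTheory GRing.Theory Num.Theory.

Section Elections.
Variables (C V : finType) (A : V -> {set C}) (k : nat).

Definition supporters (c : C) : {set V} := [set i | c \in A i].

Definition sw (W : {set C}) : nat := \sum_(i : V) #|A i :&: W|.

Definition opt_sw : nat := \max_(W' : {set C} | #|W'| == k) sw W'.

Definition util_ratio (R : rcfType) (W : {set C}) : R :=
  ((sw W)%:R / (opt_sw)%:R)%R.

(* (c, l, N') is a valid GJCR triple w.r.t. the current committee W:
   c ∉ W, 1 <= l <= k, N' ⊆ N_c, |N'| >= l n / k (i.e. |N'| k >= l n),
   and |A_i ∩ W| < l for every i ∈ N'. *)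
Definition gjcr_triple (W : {set C}) (c : C) (l : nat) (N' : {set V}) : Prop :=
  [/\ c \notin W, 1 <= l <= k, N' \subset supporters c,
      #|N'| * k >= l * #|V| & forall i, i \in N' -> #|A i :&: W| < l].

Definition gjcr_step (W W' : {set C}) : Prop :=
  exists c l (N' : {set V}),
    [/\ gjcr_triple W c l N',
        (forall c2 l2 (N2 : {set V}), gjcr_triple W c2 l2 N2 -> #|N2| <= #|N'|)
      & W' = c |: W].

(* committees reachable by GJCR from the empty committee (any tie-breaking) *)
Inductive gjcr_reachable : {set C} -> Prop :=
| gjcr_start : gjcr_reachable set0
| gjcr_next W W' : gjcr_reachable W -> gjcr_step W W' -> gjcr_reachable W'.

Definition gjcr_output (W : {set C}) : Prop :=
  gjcr_reachable W /\ (forall c l (N' : {set V}), ~ gjcr_triple W c l N').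

Definition av_completion (W Wbar : {set C}) : Prop :=
  exists T : {set C},
    [/\ T \subset ~: W, #|T| = k - #|W|, Wbar = W :|: T &
        forall T' : {set C}, T' \subset ~: W -> #|T'| = k - #|W| ->
          \sum_(c in T') #|supporters c| <= \sum_(c in T) #|supporters c|].

End Elections.

(* Main.v *)
Require Import Defs.
From mathcomp Require Import all_boot all_order all_algebra.
From mathcomp Require Import ring lra zify.
Import Order.TTheory GRing.Theory Num.Theory.
Set Implicit Arguments. Unset Strict Implicit. Unset Printing Implicit Defensive.

Section Tr.
Variables (C V : finType) (A : V -> {set C}) (k : nat).

Definition step_t := (C * nat * {set V})%type.

Fixpoint wof (s : seq step_t) : {set C} :=
  if s is st :: s' then st.1.1 |: wof s' else set0.

Fixpoint tr_ok (s : seq step_t) : Prop :=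
  if s is st :: s' then
    [/\ tr_ok s', gjcr_triple A k (wof s') st.1.1 st.1.2 st.2 &
       forall c2 l2 (N2 : {set V}), gjcr_triple A k (wof s') c2 l2 N2 -> #|N2| <= #|st.2|]
  else True.

Lemma reach_tr W : gjcr_reachable A k W -> exists s, tr_ok s /\ wof s = W.
Proof.
elim=> [|W1 W2 _ [s [ok <-]] [c [l [N [tr mx ->]]]]]; first by exists [::].
by exists ((c, l, N) :: s).
Qed.

Lemma size_wof s : tr_ok s -> #|wof s| = size s.
Proof.
elim: s => [|[[c l] N] s IH] /=; first by rewrite cards0.
case=> ok [cW _ _ _ _] _; by rewrite cardsU1 cW IH.
Qed.

Lemma triple_anti (W1 W2 : {set C}) c l (N : {set V}) : W1 \subset W2 ->
  gjcr_triple A k W2 c l N -> gjcr_triple A k W1 c l N.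
Proof.
move=> sub [cW hl hN hc hu]; split => //.
  by apply: contra cW; apply: (subsetP sub).
move=> i /hu; apply: leq_ltn_trans; apply: subset_leq_card; exact: setIS.
Qed.

Lemma mono2 st st2 s : tr_ok (st :: st2 :: s) -> #|st.2| <= #|st2.2|.
Proof.
case=> [[ok2 tr2 mx2] tr _]; apply: mx2; apply: triple_anti tr; exact: subsetUr.
Qed.

Lemma all_ge st s : tr_ok (st :: s) -> all (fun x : step_t => #|st.2| <= #|x.2|) s.
Proof.
elim: s st => [//|st2 s IH] st ok /=.
have h := mono2 ok.
rewrite h /=.
case: ok => ok2 _ _.
apply/allP => x xs; have := allP (IH _ ok2) x xs; exact: leq_trans.
Qed.

Lemma tr_pos s x : (0 < #|V|) -> tr_ok s -> x \in s -> 0 < #|x.2|.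
Proof.
move=> n0; elim: s => [//|st s IH] /= [ok [_ /andP[l1 _] _ hc _] _].
rewrite inE => /orP[/eqP->|]; last exact: IH.
have : 0 < #|st.2| * k by apply: leq_trans hc; rewrite muln_gt0 n0 andbT.
by rewrite muln_gt0 => /andP[].
Qed.

Definition tcount (i : V) (s : seq step_t) := count (fun x : step_t => i \in x.2) s.
Definition bigc (Y : nat) (s : seq step_t) := count (fun x : step_t => Y <= #|x.2|) s.
Definition bci (Y : nat) (i : V) (s : seq step_t) :=
  count (fun x : step_t => (i \in x.2) && (Y <= #|x.2|)) s.
Definition sci (Y : nat) (i : V) (s : seq step_t) :=
  count (fun x : step_t => (i \in x.2) && (#|x.2| < Y)) s.

Lemma tcount_split Y i s : tcount i s = bci Y i s + sci Y i s.
Proof.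
elim: s => [//|x s IH]; rewrite /tcount /bci /sci /= in IH *.
rewrite IH ltnNge; case: (i \in x.2); case: (Y <= #|x.2|) => /=; lia.
Qed.

Lemma tcount_le i s : tr_ok s -> tcount i s <= #|A i :&: wof s|.
Proof.
elim: s => [|[[c l] N] s IH] //= [ok [cW _ hN _ _] _]; rewrite /tcount /= in IH *.
have IH' := IH ok.
case iN: (i \in N) => /=.
  have cA : c \in A i by move: (subsetP hN i iN); rewrite inE.
  apply: (@leq_trans #|c |: (A i :&: wof s)|).
    by rewrite cardsU1 inE (negbTE cW) andbF add1n ltnS.
  apply: subset_leq_card; apply/subsetP => x; rewrite !inE.
  by case/orP => [/eqP->|/andP[-> ->]]; rewrite ?eqxx ?cA ?orbT.
rewrite add0n; apply: leq_trans IH' _; apply: subset_leq_card; apply: setIS; exact: subsetUr.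
Qed.

Lemma tall_big Y i s : all (fun x : step_t => Y <= #|x.2|) s -> tcount i s <= bigc Y s.
Proof.
elim: s => [//|x s IH] /= /andP[-> /IH]; rewrite /tcount /bigc => h /=.
by case: (i \in x.2) => /=; rewrite ?add1n ?add0n ?ltnS // (leq_trans h).
Qed.

Lemma bigc_pos_voter Y s : 0 < #|V| -> tr_ok s -> 0 < bigc Y s -> exists i, 0 < bci Y i s.
Proof.
move=> n0; elim: s => [//|x s IH] ok; have ok' := ok; case: ok' => ok1 _ _.
rewrite /bigc /= -/(bigc Y s).
case hY: (Y <= #|x.2|) => /=.
  move=> _; have := tr_pos n0 ok (mem_head _ _).
  rewrite card_gt0 => /set0Pn [i iN]; exists i.
  by rewrite /bci /= iN.
rewrite add0n => /(IH ok1) [i hi]; exists i.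
by rewrite /bci /= andbF add0n.
Qed.

Variable R : rcfType.

Lemma frac_le (a b c d : nat) : 0 < b -> 0 < d -> a * d <= c * b ->
  (a%:R / b%:R <= c%:R / d%:R :> R)%R.
Proof.
move=> b0 d0 h; rewrite ler_pdivrMr ?ltr0n // mulrAC ler_pdivlMr ?ltr0n //.
by rewrite -!natrM ler_nat.
Qed.

Lemma frac_lt (a b c d : nat) : 0 < b -> 0 < d -> a * d < c * b ->
  (a%:R / b%:R < c%:R / d%:R :> R)%R.
Proof.
move=> b0 d0 h; rewrite ltr_pdivrMr ?ltr0n // mulrAC ltr_pdivlMr ?ltr0n //.
by rewrite -!natrM ltr_nat.
Qed.

Local Open Scope ring_scope.

Definition pay (i : V) (s : seq step_t) : R :=
  \sum_(x <- s) (if i \in x.2 then (#|x.2|%:R)^-1 else 0).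

Lemma pay_cons i x s : pay i (x :: s) =
  (if i \in x.2 then (#|x.2|%:R)^-1 else 0) + pay i s.
Proof. by rewrite /pay big_cons. Qed.

Lemma inv_le (b d : nat) : (0 < d)%N -> (d <= b)%N -> (b%:R^-1 <= d%:R^-1 :> R).
Proof.
move=> d0 db; have b0 : (0 < b)%N by apply: leq_trans db.
by rewrite lef_pV2 ?posrE ?ltr0n // ler_nat.
Qed.

Lemma pay_le_x i s (x : nat) : (0 < x)%N -> all (fun st : step_t => x <= #|st.2|)%N s ->
  pay i s <= (tcount i s)%:R / x%:R.
Proof.
move=> x0; elim: s => [|st s IH] /=; first by rewrite /pay big_nil mul0r.
case/andP=> hx /IH {}IH; rewrite pay_cons /tcount /= -/(tcount i s) natrD mulrDl.
apply: lerD => //; case: (i \in st.2) => /=; last by rewrite mul0r.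
by rewrite mul1r; apply: inv_le.
Qed.

Lemma pay_split i s (x Y : nat) : (0 < x)%N -> (0 < Y)%N ->
  all (fun st : step_t => x <= #|st.2|)%N s ->
  pay i s <= (bci Y i s)%:R / Y%:R + (sci Y i s)%:R / x%:R.
Proof.
move=> x0 Y0; elim: s => [|st s IH] /=; first by rewrite /pay big_nil !mul0r addr0.
case/andP=> hx /IH {}IH; rewrite pay_cons /bci /sci /= -/(bci Y i s) -/(sci Y i s).
rewrite !natrD !mulrDl addrACA; apply: lerD => //.
case: (i \in st.2) => /=; last by rewrite !mul0r addr0.
rewrite ltnNge; case hY: (Y <= #|st.2|)%N => /=.
  by rewrite mul1r mul0r addr0; apply: inv_le.
by rewrite mul1r mul0r add0r; apply: inv_le.
Qed.

Lemma pay_main Y s : (0 < #|V|)%N -> (0 < Y)%N -> tr_ok s -> (bigc Y s * #|V| < Y * k)%N ->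
  forall i, pay i s <= k%:R / (#|V|)%:R /\
     ((0 < bci Y i s)%N -> pay i s < k%:R / (#|V|)%:R).
Proof.
move=> n0 Y0; elim: s => [|[[c l] N] s IH] ok hB i.
  split=> //; rewrite /pay big_nil divr_ge0 //.
have ok' := ok; case: ok' => ok1 tr mx; case: (tr) => cW /andP[l1 lk] hN hc hu.
have hB' : (bigc Y s * #|V| < Y * k)%N.
  apply: leq_ltn_trans hB; rewrite leq_mul2r /bigc /= leq_addl orbT //.
case iN: (i \in N); last first.
  by rewrite pay_cons /bci /= iN /= add0r add0n; apply: IH.
set g := #|N|.
have g0 : (0 < g)%N := tr_pos n0 ok (mem_head _ _).
have allg : all (fun x : step_t => g <= #|x.2|)%N ((c, l, N) :: s).
  by rewrite /= leqnn (all_ge ok).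
have ht : (tcount i ((c, l, N) :: s) <= l)%N.
  rewrite /tcount /= -/(tcount i s) iN add1n.
  exact: leq_ltn_trans (tcount_le i ok1) (hu i iN).
have hpay := pay_le_x i g0 allg.
have hkn : (tcount i ((c, l, N) :: s) * #|V| <= k * g)%N.
  by apply: leq_trans (leq_mul ht (leqnn _)) _; rewrite [(k * g)%N]mulnC.
split; first exact: le_trans hpay (frac_le g0 n0 hkn).
move=> hb; case: (leqP Y g) => hYg.
  apply: le_lt_trans hpay (frac_lt g0 n0 _).
  have allY : all (fun x : step_t => Y <= #|x.2|)%N ((c, l, N) :: s).
    apply/allP => x xs; exact: leq_trans hYg (allP allg x xs).
  have := tall_big i allY => ht2.
  apply: leq_ltn_trans (leq_mul ht2 (leqnn _)) _.
  by apply: leq_trans hB _; rewrite [(Y * k)%N]mulnC leq_mul2l hYg orbT.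
have hsp := pay_split i g0 Y0 allg.
apply: le_lt_trans hsp _.
apply: lt_le_trans (frac_le g0 n0 hkn).
rewrite (tcount_split Y) natrD mulrDl ltrD2r.
apply: frac_lt => //; by rewrite ltn_mul2l hb hYg.
Qed.

Lemma sum_pay s : (0 < #|V|)%N -> tr_ok s -> \sum_(i : V) pay i s = (size s)%:R.
Proof.
move=> n0; rewrite /pay exchange_big /=.
elim: s => [|x s IH] ok; first by rewrite big_nil.
have ok' := ok; case: ok' => ok1 _ _.
rewrite big_cons IH // -big_mkcond /= sumr_const.
have g0 : (0 < #|x.2|)%N := tr_pos n0 ok (mem_head _ _).
by rewrite -[_ *+ #|x.2|]mulr_natr mulVf ?pnatr_eq0 -?lt0n // -nat1r.
Qed.

Lemma size_lt Y s : (0 < #|V|)%N -> (0 < Y)%N -> tr_ok s ->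
  (bigc Y s * #|V| < Y * k)%N -> (0 < bigc Y s)%N -> (size s < k)%N.
Proof.
move=> n0 Y0 ok hB hb.
have [i hi] := bigc_pos_voter n0 ok hb.
have hm := pay_main n0 Y0 ok hB.
suff : (size s)%:R < k%:R :> R by rewrite ltr_nat.
rewrite -sum_pay //.
have -> : k%:R = \sum_(j : V) (k%:R / (#|V|)%:R) :> R.
  by rewrite sumr_const -[_ / _ *+ _]mulr_natr (_ : #|xpredT| = #|V|) // divfK // pnatr_eq0 -lt0n.
rewrite (bigD1 i) //= [X in _ < X](bigD1 i) //=.
apply: ltr_leD; first by apply: (hm i).2.
by apply: ler_sum => j _; apply: (hm j).1.
Qed.

Local Close Scope ring_scope.

Lemma wof_sub st s : wof s \subset wof (st :: s).
Proof. exact: subsetUr. Qed.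

Lemma u_le_W i (W : {set C}) : #|A i :&: W| <= #|W|.
Proof. apply: subset_leq_card; exact: subsetIr. Qed.

Lemma c0_triple s c0 m : tr_ok s -> c0 \notin wof s -> size s < m -> m <= k ->
  m * #|V| <= #|supporters A c0| * k ->
  gjcr_triple A k (wof s) c0 m (supporters A c0).
Proof.
move=> ok c0W sm mk hm; split => //.
- by rewrite mk andbT (leq_ltn_trans _ sm).
- move=> i _; apply: leq_ltn_trans (u_le_W i _) _; by rewrite size_wof.
Qed.

Lemma bigc_first s c0 : tr_ok s -> c0 \notin wof s -> forall m, m <= size s -> m <= k ->
  m * #|V| <= #|supporters A c0| * k -> m <= bigc #|supporters A c0| s.
Proof.
elim: s => [|[[c l] N] s IH] ok c0W m /=; first by rewrite leqn0 => /eqP->.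
have ok' := ok; case: ok' => ok1 tr mx.
have c0W' : c0 \notin wof s by apply: contra c0W; apply/subsetP/wof_sub.
rewrite leq_eqVlt ltnS => /orP[/eqP-> | ms] mk hm; last first.
  rewrite /bigc /= -/(bigc _ s); apply: leq_trans (IH ok1 c0W' m ms mk hm) _; exact: leq_addl.
have hv : gjcr_triple A k (wof s) c0 (size s).+1 (supporters A c0).
  by apply: c0_triple.
have big := mx _ _ _ hv.
rewrite /bigc /= -/(bigc _ s) big add1n ltnS.
apply: IH => //; first by apply: ltnW.
by apply: leq_trans hm; rewrite leq_mul2r leqnSn orbT.
Qed.

Lemma bigc_final s c0 : tr_ok s ->
  (forall c l (N : {set V}), ~ gjcr_triple A k (wof s) c l N) ->
  c0 \notin wof s -> forall m, m <= k ->
  m * #|V| <= #|supporters A c0| * k -> m <= bigc #|supporters A c0| s.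
Proof.
move=> ok term c0W m mk hm.
case: (leqP m (size s)) => ms; first exact: bigc_first.
exfalso; apply: (term c0 (size s).+1 (supporters A c0)).
apply: c0_triple => //; first exact: leq_trans ms mk.
by apply: leq_trans hm; rewrite leq_mul2r ms orbT.
Qed.

Lemma bigc_card Y s : tr_ok s ->
  bigc Y s <= #|[set c in wof s | Y <= #|supporters A c|]|.
Proof.
elim: s => [|[[c l] N] s IH] ok; first by rewrite /bigc /= leq0n.
have ok' := ok; case: ok' => ok1 [cW _ hN _ _] _.
rewrite /bigc /= -/(bigc _ s).
case hY: (Y <= #|N|) => /=.
  have hYc : Y <= #|supporters A c| by apply: leq_trans hY (subset_leq_card hN).
  apply: (@leq_trans #|c |: [set x in wof s | Y <= #|supporters A x|]|).
    by rewrite cardsU1 inE (negbTE cW) /= add1n ltnS IH.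
  apply: subset_leq_card; apply/subsetP => x; rewrite !inE.
  by case/orP => [/eqP->|/andP[-> ->]]; rewrite ?eqxx ?hYc ?orbT.
rewrite add0n; apply: leq_trans (IH ok1) _; apply: subset_leq_card; apply/subsetP => x.
by rewrite !inE => /andP[-> ->]; rewrite orbT.
Qed.

Lemma wof_support s c : tr_ok s -> c \in wof s -> #|V| <= #|supporters A c| * k.
Proof.
elim: s => [|[[c1 l] N] s IH] ok; first by rewrite inE.
have ok' := ok; case: ok' => ok1 [_ /andP[l1 _] hN hc _] _.
rewrite /= in_setU1 => /orP[/eqP->|]; last exact: IH.
apply: leq_trans _ (leq_trans hc _); first by rewrite -[X in X <= _]mul1n leq_mul2r l1 orbT.
by rewrite leq_mul2r (subset_leq_card hN) orbT.
Qed.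

End Tr.
Lemma sw_sum (C V : finType) (A : V -> {set C}) (X : {set C}) :
  sw A X = \sum_(c in X) #|supporters A c|.
Proof.
rewrite /sw.
have e : forall i, #|A i :&: X| = \sum_(c in X) (c \in A i : nat).
  move=> i; rewrite -sum1_card big_mkcond [RHS]big_mkcond /=.
  by apply: eq_bigr => c _; rewrite !inE; case: (c \in X); case: (c \in A i).
rewrite (eq_bigr _ (fun i _ => e i)) exchange_big /=.
apply: eq_bigr => c _; rewrite -sum1_card [RHS]big_mkcond /=.
by apply: eq_bigr => i _; rewrite inE; case: (c \in A i).
Qed.

Local Open Scope ring_scope.
Lemma key_real (R : rcfType) (k n Y b r M : nat) : (1 <= k)%N -> (0 < n)%N ->
  (k <= b + r)%N -> (b * k * Y + r * n <= k * M)%N -> (k <= b \/ Y * k <= b * n)%N ->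
  (2 * Num.sqrt (k%:R) - 1) * Y%:R <= M%:R :> R.
Proof.
move=> k1 n0 hbr hM hb.
set s := Num.sqrt (k%:R : R).
have s0 : 0 <= s by apply: sqrtr_ge0.
have ss : s * s = k%:R by rewrite -expr2 sqr_sqrtr ?ler0n.
have K0 : 0 < k%:R :> R by rewrite ltr0n.
have N0 : 0 < n%:R :> R by rewrite ltr0n.
have Y0 : 0 <= Y%:R :> R by rewrite ler0n.
have kg : 2 * s - 1 <= k%:R :> R.
  have : 0 <= (s - 1) ^+ 2 by apply: sqr_ge0.
  rewrite expr2; nra.
suff : k%:R * ((2 * s - 1) * Y%:R) <= k%:R * M%:R.
  by rewrite ler_pM2l.
have hMr : b%:R * k%:R * Y%:R + r%:R * n%:R <= k%:R * M%:R :> R.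
  by rewrite -!natrM -natrD ler_nat.
case: hb => hb.
  have hbk : k%:R <= b%:R :> R by rewrite ler_nat.
  have : 0 <= r%:R * n%:R :> R by rewrite -natrM ler0n.
  have : k%:R * k%:R * Y%:R <= b%:R * k%:R * Y%:R :> R.
    by rewrite -!mulrA ler_wpM2r // mulr_ge0 // ler0n.
  have : k%:R * (2 * s - 1) * Y%:R <= k%:R * k%:R * Y%:R :> R.
    by rewrite ler_wpM2r // ler_wpM2l // ler0n.
  rewrite mulrA; lra.
have hbkn : (b < k)%N \/ (k <= b)%N by case: (ltnP b k); [left|right].
case: hbkn => hbk; last first.
  have hbk' : k%:R <= b%:R :> R by rewrite ler_nat.
  have : 0 <= r%:R * n%:R :> R by rewrite -natrM ler0n.
  have : k%:R * k%:R * Y%:R <= b%:R * k%:R * Y%:R :> R.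
    by rewrite -!mulrA ler_wpM2r // mulr_ge0 // ler0n.
  have : k%:R * (2 * s - 1) * Y%:R <= k%:R * k%:R * Y%:R :> R.
    by rewrite ler_wpM2r // ler_wpM2l // ler0n.
  rewrite mulrA; lra.
have hr : (k - b <= r)%N by lia.
have hrR : k%:R - b%:R <= r%:R :> R by rewrite -natrB ?ler_nat // ltnW.
have hbR : b%:R <= k%:R :> R by rewrite ler_nat ltnW.
have hZ : Y%:R * k%:R <= b%:R * n%:R :> R by rewrite -!natrM ler_nat.
set Z : R := Y%:R * k%:R.
have hM2 : b%:R * Z + (k%:R - b%:R) * n%:R <= k%:R * M%:R.
  apply: le_trans hMr; rewrite /Z -mulrA [Y%:R * _]mulrC mulrA lerD2l.
  by rewrite ler_wpM2r // ler0n.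
have goalE : k%:R * ((2 * s - 1) * Y%:R) = (2 * s - 1) * Z by rewrite /Z; ring.
rewrite goalE; apply: le_trans hM2.
case: (lerP n%:R Z) => hZn.
  suff : n%:R * ((2 * s - 1) * Z) <= n%:R * (b%:R * Z + (k%:R - b%:R) * n%:R).
    by rewrite ler_pM2l.
  have h1 : Z * (Z - n%:R) <= b%:R * n%:R * (Z - n%:R).
    by rewrite ler_wpM2r // subr_ge0.
  have h2 : 0 <= (Z - s * n%:R) ^+ 2 by apply: sqr_ge0.
  rewrite expr2 in h2.
  have e : n%:R * (b%:R * Z + (k%:R - b%:R) * n%:R) - n%:R * ((2 * s - 1) * Z)
     = b%:R * n%:R * (Z - n%:R) + (s * s) * n%:R * n%:R - 2 * s * Z * n%:R + Z * n%:R.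
    by rewrite ss; ring.
  rewrite -subr_ge0 e.
  have e2 : (Z - s * n%:R) * (Z - s * n%:R) = Z * (Z - n%:R) + (s * s) * n%:R * n%:R - 2 * s * Z * n%:R + Z * n%:R by ring.
  lra.
have h1 : k%:R * (Z - n%:R) <= b%:R * (Z - n%:R).
  by rewrite ler_wnM2r // subr_le0 ltW.
have hZ0 : 0 <= Z by rewrite /Z mulr_ge0 // ler0n.
have h3 : (2 * s - 1) * Z <= k%:R * Z by rewrite ler_wpM2r.
have e : b%:R * Z + (k%:R - b%:R) * n%:R = b%:R * (Z - n%:R) + k%:R * n%:R by ring.
rewrite e.
have e2 : k%:R * (Z - n%:R) = k%:R * Z - k%:R * n%:R by ring.
lra.
Qed.
Unset Implicit Arguments.

Theorem theorem3 (R : rcfType) (C V : finType) (A : V -> {set C}) (k : nat)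
  (W Wbar : {set C}) :
  (1 <= k)%N -> (k <= #|C|)%N ->
  gjcr_output A k W ->
  av_completion A k W Wbar ->
  (0 < opt_sw A k)%N ->
  2 / Num.sqrt (k%:R) - 1 / k%:R <= util_ratio A k R Wbar.
Proof.
move=> k1 kC [reach term] [T [TW Tc eqW Tmax]] opt0.
have n0 : (0 < #|V|)%N.
  rewrite lt0n; apply/negP => /eqP nV; move: opt0.
  rewrite /opt_sw big1 // => W' _; rewrite /sw big1 // => i _.
  by have := card0_eq nV i; rewrite !inE.
have [Ws hWs optE] : {Ws : {set C} | #|Ws| == k & opt_sw A k = sw A Ws}.
  apply: (eq_bigmax_cond (sw A)).
  case: (pickP (fun W' : {set C} => #|W'| == k)) => [W0 h|none].
    by apply/card_gt0P; exists W0.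
  by move: opt0; rewrite /opt_sw big_pred0.
set a := fun c => #|supporters A c|.
have WT0 : W :&: T = set0.
  apply/setP => x; rewrite !inE; apply/negbTE/negP => /andP[xW xT].
  by move: (subsetP TW x xT); rewrite inE xW.
have cardWb : #|Wbar| = (#|W| + #|T|)%N by rewrite eqW cardsU WT0 cards0 subn0.
have kWb : (k <= #|Wbar|)%N by rewrite cardWb Tc; lia.
have [s [ok eW]] := reach_tr reach.
have term' : forall c l (N : {set V}), ~ gjcr_triple A k (wof s) c l N by rewrite eW.
set Y := (\max_(c | c \notin Wbar) a c)%N.
have hYge : forall c, c \notin Wbar -> (a c <= Y)%N by move=> c h; apply: leq_bigmax_cond.
have hT : forall t, t \in T -> (Y <= a t)%N.
  move=> t tT; apply/bigmax_leqP => c cWb.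
  have cW : c \notin W by apply: contra cWb; rewrite eqW inE => ->.
  have cT : c \notin T by apply: contra cWb; rewrite eqW inE => ->; rewrite orbT.
  have cT' : c \notin T :\ t by rewrite inE negb_and cT orbT.
  have h1 : c |: (T :\ t) \subset ~: W.
    apply/subsetP => x; rewrite !inE => /orP[/eqP-> | /andP[_ xT]]; first by [].
    by move: (subsetP TW x xT); rewrite inE.
  have h2 : #|c |: (T :\ t)| = (k - #|W|)%N.
    by rewrite cardsU1 cT' -Tc (cardsD1 t T) tT.
  have := Tmax _ h1 h2.
  by rewrite (big_setU1 _ cT') (big_setD1 _ tT) /= leq_add2r.
have hmem : forall c, c \in Wbar -> (Y <= a c)%N || (#|V| <= a c * k)%N.
  move=> c; rewrite eqW inE => /orP[cW|cT]; last by rewrite hT.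
  by rewrite (wof_support ok) ?orbT // eW.
set Pset := [set c | (Y <= a c)%N].
set b := #|Wbar :&: Pset|.
have hb : (k <= b)%N \/ (Y * k <= b * #|V|)%N.
  case: (ltnP (Y * k) #|V|) => hYn.
    left; rewrite /b; have -> : Wbar :&: Pset = Wbar.
      apply/setIidPl/subsetP => c cWb; rewrite inE.
      case/orP: (hmem c cWb) => // h; apply: ltnW.
      by rewrite -(ltn_pmul2r k1) (leq_trans hYn h).
    exact: kWb.
  have [c0 c0Wb Yc0] : {c0 | c0 \in [pred c | c \notin Wbar] & Y = a c0}.
    apply: eq_bigmax_cond.
    case: (pickP (fun c => c \notin Wbar)) => [c1 h1|none].
      by apply/card_gt0P; exists c1.
    exfalso; have Y0 : Y = 0%N by rewrite /Y big_pred0.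
    by move: hYn; rewrite Y0 mul0n leqn0 => /eqP n00; rewrite n00 in n0.
  rewrite inE in c0Wb.
  have c0W : c0 \notin wof s by rewrite eW; apply: contra c0Wb; rewrite eqW inE => ->.
  have hfirst : forall m, (m <= k)%N -> (m * #|V| <= Y * k)%N -> (m <= bigc Y s)%N.
    by rewrite Yc0; exact: bigc_final ok term' c0W.
  set B := bigc Y s.
  have hBW : (B + (k - #|W|) <= b)%N.
    have h := bigc_card Y ok; rewrite eW in h.
    apply: leq_trans (leq_add h (leqnn _)) _; rewrite -Tc.
    set S := [set c in W | _].
    have disj : S :&: T = set0.
      apply/setP => x; rewrite !inE; apply/negbTE/negP => /andP[/andP[xW _] xT].
      by move: (subsetP TW x xT); rewrite inE xW.
    have e : #|S :|: T| = (#|S| + #|T|)%N by rewrite cardsU disj cards0 subn0.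
    rewrite -e; apply: subset_leq_card; apply/subsetP => x; rewrite !inE eqW !inE.
    case/orP => [/andP[-> ->] // | xT]; by rewrite xT orbT hT.
  case: (leqP k B) => hkB.
    by left; apply: leq_trans hkB (leq_trans (leq_addr _ _) hBW).
  case: (leqP (Y * k) (B * #|V|)) => hYB.
    right; apply: leq_trans hYB _; by rewrite leq_mul2r (leq_trans (leq_addr _ _) hBW) orbT.
  right.
  have Y0 : (0 < Y)%N.
    by have : (0 < Y * k)%N := leq_trans n0 hYn; rewrite muln_gt0 => /andP[].
  have hB1 : (0 < B)%N by apply: hfirst => //; rewrite mul1n.
  have hsz := size_lt R n0 Y0 ok hYB hB1.
  have hWk : (#|W| < k)%N by rewrite -eW (size_wof ok).
  have hB1' : (Y * k < (B + 1) * #|V|)%N.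
    rewrite ltnNge; apply/negP => h.
    have hk : (B + 1 <= k)%N by rewrite addn1.
    by have := hfirst _ hk h; rewrite addn1 ltnn.
  apply: leq_trans (ltnW hB1') _; rewrite leq_mul2r; apply/orP; right.
  apply: leq_trans hBW; rewrite leq_add2l; lia.
set M := (\sum_(c in Wbar) minn (a c) Y)%N.
have hM : (b * k * Y + #|Wbar :\: Pset| * #|V| <= k * M)%N.
  rewrite /M (big_setID Pset) /= mulnDr; apply: leq_add.
    rewrite (eq_bigr (fun _ => Y)); last first.
      by move=> c; rewrite !inE => /andP[_ h]; apply/minn_idPr.
    by rewrite sum_nat_const -mulnA mulnCA.
  rewrite big_distrr /= -sum_nat_const; apply: leq_sum => c.
  rewrite !inE => /andP[cP cWb].
  have := hmem c cWb; rewrite (negbTE cP) /= => h.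
  have -> : minn (a c) Y = a c by apply/minn_idPl; rewrite ltnW // ltnNge.
  by rewrite mulnC.
have hcard : (b + #|Wbar :\: Pset|)%N = #|Wbar| := cardsID Pset Wbar.
have hkbr : (k <= b + #|Wbar :\: Pset|)%N by rewrite hcard.
have hkey := @key_real R k #|V| Y b #|Wbar :\: Pset| M k1 n0 hkbr hM hb.
set P' := Wbar :&: Ws.
set Q := Wbar :\: Ws.
set D := Ws :\: Wbar.
have hS : sw A Wbar = (\sum_(c in P') a c + \sum_(c in Q) a c)%N.
  by rewrite sw_sum (big_setID Ws).
have hO : opt_sw A k = (\sum_(c in P') a c + \sum_(c in D) a c)%N.
  by rewrite optE sw_sum (big_setID Wbar) /= setIC.
have hD : (\sum_(c in D) a c <= #|D| * Y)%N.
  rewrite -sum_nat_const; apply: leq_sum => c; rewrite inE => /andP[cWb _].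
  exact: hYge.
have hPD : (#|P'| + #|D|)%N = k by rewrite /P' setIC cardsID; apply/eqP.
have hMs : M = (\sum_(c in P') minn (a c) Y + \sum_(c in Q) minn (a c) Y)%N.
  by rewrite /M (big_setID Ws).
have hmQ : (\sum_(c in Q) minn (a c) Y <= \sum_(c in Q) a c)%N.
  by apply: leq_sum => c _; apply: geq_minl.
set sq := Num.sqrt (k%:R : R).
set g := 2 * sq - 1.
set K := (k%:R : R).
have K0 : 0 < K by rewrite ltr0n.
have sq1 : 1 <= sq by rewrite -sqrtr1 ler_sqrt ?ler1n.
have ss : sq * sq = K by rewrite -expr2 sqr_sqrtr ?ler0n.
have g0 : 0 <= g by rewrite /g; lra.
have gK : g <= K.
  have : 0 <= (sq - 1) ^+ 2 by apply: sqr_ge0.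
  rewrite expr2 /g -ss; nra.
set aP := (\sum_(c in P') a c)%N.
set aQ := (\sum_(c in Q) a c)%N.
set aD := (\sum_(c in D) a c)%N.
set mP := (\sum_(c in P') minn (a c) Y)%N.
set mQ := (\sum_(c in Q) minn (a c) Y)%N.
have hpt : K * mP%:R <= (K - g) * aP%:R + g * (#|P'|%:R * Y%:R).
  have : \sum_(c in P') (K * (minn (a c) Y)%:R) <=
         \sum_(c in P') ((K - g) * (a c)%:R + g * Y%:R).
    apply: ler_sum => c _.
    case: (leqP (a c) Y) => h.
      have : (a c)%:R <= Y%:R :> R by rewrite ler_nat.
      nra.
    have : Y%:R <= (a c)%:R :> R by rewrite ler_nat ltnW.
    nra.
  rewrite big_split /= -!mulr_sumr sumr_const -!natr_sum.
  by rewrite -/mP -/aP -[Y%:R *+ _]mulr_natl.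
have hkeyK : K * (g * Y%:R) <= K * mP%:R + K * mQ%:R.
  by rewrite -mulrDr -natrD -hMs ler_pM2l.
have hmQR : mQ%:R <= aQ%:R :> R by rewrite ler_nat.
have hDR : aD%:R <= #|D|%:R * Y%:R :> R by rewrite -natrM ler_nat.
have hPDR : #|P'|%:R + #|D|%:R = K by rewrite -natrD hPD.
have main : g * (opt_sw A k)%:R <= K * (sw A Wbar)%:R.
  rewrite hO hS !natrD.
  have e1 : g * (#|D|%:R * Y%:R) = g * (K * Y%:R) - g * (#|P'|%:R * Y%:R).
    by rewrite -hPDR; ring.
  have f1 : g * aD%:R <= g * (#|D|%:R * Y%:R) by rewrite ler_wpM2l.
  have f2 : K * mQ%:R <= K * aQ%:R by rewrite ler_wpM2l // ltW.
  have e2 : K * (g * Y%:R) = g * (K * Y%:R) by ring.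
  have e3 : (K - g) * aP%:R = K * aP%:R - g * aP%:R by ring.
  rewrite mulrDr mulrDr.
  lra.
have O0 : 0 < (opt_sw A k)%:R :> R by rewrite ltr0n.
have sq0 : sq != 0 by rewrite gt_eqF // (lt_le_trans ltr01 sq1).
have e : 2 / sq - 1 / K = g / K.
  rewrite /g -ss; field; exact: sq0.
rewrite /util_ratio -/sq -/K e ler_pdivrMr // mulrAC ler_pdivlMr //.
by rewrite [_ * K]mulrC.
Qed.
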